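(* Let $X$ be an arbitrary set, let $\mathcal{P}=\{X_i \mid i\in I\}$ be a partition of $X$, and let $f\in T(X,\mathcal{P})$. Then the following statements are equivalent: (i) $f\in \Sigma(X,\mathcal{P})$; (ii) the character $\chi^{(f)}\colon I\to I$ is surjective; (iii) $f\in S_{\mathcal{P}}(X)$ and $Af^{-1}\neq\emptyset$ for every nonempty open set $A\subseteq X$ (open with respect to the topology on $X$ having $\mathcal{P}$ as a basis).
   Context: Maps are written on the right: $xf$ is the image of $x$, and $Af=\{af\mid a\in A\}$, $Af^{-1}=\{x\in X\mid xf\in A\}$. $\mathcal{T}_X$ is the semigroup of all maps $X\to X$. For a partition $\mathcal{P}=\{X_i\mid i\in I\}$ of $X$ (distinct indices correspond to distinct blocks), $T(X,\mathcal{P})=\{f\in\mathcal{T}_X \mid \forall i\in I\ \exists j\in I:\ X_if\subseteq X_j\}$ and $\Sigma(X,\mathcal{P})=\{f\in T(X,\mathcal{P})\mid Xf\cap X_i\neq\emptyset \text{ for all } i\in I\}$. For $f\in T(X,\mathcal{P})$, the character of $f$ is the map $\chi^{(f)}\colon I\to I$ defined by $i\chi^{(f)}=j$ whenever $X_if\subseteq X_j$. The topology on $X$ having $\mathcal{P}$ as a basis is the one whose open sets are exactly the unions of blocks of $\mathcal{P}$; $S_{\mathcal{P}}(X)$ denotes the set of all continuous maps $X\to X$ for this topology. *)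

(* Defs.v *)
(* sets are predicates X -> Prop. Maps are ordinary functions
   (the paper writes them on the right: x f = f x). *)
From Stdlib Require Import ClassicalEpsilon.

Set Implicit Arguments.

Record is_partition (X I : Type) (P : I -> X -> Prop) : Prop := {
  part_nonempty : forall i, exists x, P i x;
  part_disjoint : forall i j x, P i x -> P j x -> i = j;
  part_cover    : forall x, exists i, P i x }.

Definition in_T (X I : Type) (P : I -> X -> Prop) (f : X -> X) : Prop :=
  forall i, exists j, forall x, P i x -> P j (f x).

Definition in_Sigma (X I : Type) (P : I -> X -> Prop) (f : X -> X) : Prop :=
  in_T P f /\ forall i, exists x, P i (f x).

(* The character chi^(f) : I -> I of f in T(X,P): i chi = j whenever X_i f ⊆ X_j.
   (For a partition, such j is unique.) *)
Definition character (X I : Type) (P : I -> X -> Prop) (f : X -> X)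
  (Hf : in_T P f) : I -> I :=
  fun i => proj1_sig (constructive_indefinite_description _ (Hf i)).

Definition surjective (A B : Type) (g : A -> B) : Prop :=
  forall b, exists a, g a = b.

Definition P_open (X I : Type) (P : I -> X -> Prop) (A : X -> Prop) : Prop :=
  exists J : I -> Prop, forall x, A x <-> exists i, J i /\ P i x.

Definition P_continuous (X I : Type) (P : I -> X -> Prop) (f : X -> X) : Prop :=
  forall A, P_open P A -> P_open P (fun x => A (f x)).

(* Main.v *)
Require Import Defs.
From Stdlib Require Import ClassicalEpsilon.

Lemma char_spec (X I : Type) (P : I -> X -> Prop) (f : X -> X)
  (Hf : in_T P f) i x : P i x -> P (character Hf i) (f x).
Proof.
  unfold character. destruct (constructive_indefinite_description _ (Hf i)) as [j Hj].
  simpl. apply Hj.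
Qed.

Theorem theorem3p2 (X I : Type) (P : I -> X -> Prop) (f : X -> X)
  (HP : is_partition P) (Hf : in_T P f) :
  (in_Sigma P f <-> surjective (character Hf)) /\
  (surjective (character Hf) <->
     (P_continuous P f /\
      forall A : X -> Prop, P_open P A -> (exists x, A x) ->
        exists x, A (f x))).
Proof.
  destruct HP as [Hne Hdis Hcov].
  assert (key : forall j, (exists x, P j (f x)) -> exists i, character Hf i = j).
  { intros j [x Hx]. destruct (Hcov x) as [i Hi]. exists i.
    eapply Hdis; [apply (@char_spec _ _ _ _ Hf _ _ Hi)| exact Hx]. }
  split; split.
  - intros [_ H] j. apply key, H.
  - intros H. split; [exact Hf|]. intros j. destruct (H j) as [i <-].
    destruct (Hne i) as [x Hx]. exists x. apply (@char_spec _ _ _ _ Hf _ _ Hx).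
  - intros H. split.
    + intros A [J HJ]. exists (fun i => J (character Hf i)). intros x.
      rewrite HJ. destruct (Hcov x) as [i Hi]. split.
      * intros [k [Jk Pk]]. exists i. split; [|exact Hi].
        rewrite (Hdis _ _ _ (@char_spec _ _ _ _ Hf _ _ Hi) Pk). exact Jk.
      * intros [k [Jk Pk]]. exists (character Hf k). split; [exact Jk|].
        apply (@char_spec _ _ _ _ Hf _ _ Pk).
    + intros A [J HJ] [x Ax]. apply HJ in Ax. destruct Ax as [k [Jk Pk]].
      destruct (H k) as [i Hi]. destruct (Hne i) as [y Hy]. exists y.
      apply HJ. exists k. split; [exact Jk|]. rewrite <- Hi. apply (@char_spec _ _ _ _ Hf _ _ Hy).
  - intros [_ H] j. apply key.
    apply (H (P j)).
    + exists (fun k => k = j). intros x. split.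
      * intros Hx. exists j. auto.
      * intros [k [-> Hk]]. exact Hk.
    + apply Hne.
Qed.
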